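(* Let $S_7\subseteq G^7$ be the stabilizer group generated by $g_1=IIIXXXX$, $g_2=IXXIIXX$, $g_3=XIXIXIX$, $g_4=IIIZZZZ$, $g_5=IZZIIZZ$, $g_6=ZIZIZIZ$ (tensor signs omitted, $j$-th letter acting on qubit $j$). Define $\phi:\mathbb{F}_2^6\to G^7$ by $\phi(\epsilon_1,\dots,\epsilon_6)=Z_a X_b$, where $a=4\epsilon_1+2\epsilon_2+\epsilon_3$, $b=4\epsilon_4+2\epsilon_5+\epsilon_6$, $Z_a$ (resp. $X_b$) denotes $Z$ (resp. $X$) on qubit $a$ (resp. $b$) and identity elsewhere, and $Z_0=X_0=I^{\otimes 7}$. Then $f_{S_7}(0)=f_{S_7}(1)=1$, $f_{S_7}(2)=\tfrac{9}{16}$, $f_{S_7}(3)=\tfrac{5}{16}$, $f_{S_7}(4)=\tfrac{5}{64}$, and $f_{S_7}(5)=f_{S_7}(6)=f_{S_7}(7)=0$.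
   Context: $X=\begin{pmatrix}0&1\\1&0\end{pmatrix}$, $Y=\begin{pmatrix}0&1\\-1&0\end{pmatrix}$, $Z=\begin{pmatrix}1&0\\0&-1\end{pmatrix}$. For a stabilizer group $S\subseteq G^n$ (abelian subgroup of the $n$-qubit Pauli group not containing $-I$) with independent generators $g_1,\dots,g_r$, the syndrome of a Pauli operator $g$ is $\epsilon(g)\in\mathbb{F}_2^r$, $\epsilon_i(g)=0$ if $g$ commutes with $g_i$ and $1$ if it anticommutes. For $\{m\}\subseteq\{1,\dots,n\}$, $P^{\{m\}}$ is the set of tensor products that are one of $I,X,Y,Z$ on each qubit of $\{m\}$ and $I$ elsewhere. Given an error correcting function $\phi:\mathbb{F}_2^r\to G^n$, call a syndrome $\epsilon\in\Sigma_{\{m\}}:=\{\epsilon(g):g\in P^{\{m\}}\}$ good for $\{m\}$ if $\phi(\epsilon)g\in\{\lambda s:s\in S,\lambda\in\{\pm1,\pm i\}\}$ for every $g\in P^{\{m\}}$ with $\epsilon(g)=\epsilon$. Define, for $t=0,\dots,n$, $$f_S(t)=\binom{n}{t}^{-1}\sum_{|\{m\}|=t}\frac{|\{\epsilon\in\Sigma_{\{m\}}:\epsilon\text{ good for }\{m\}\}|}{|\Sigma_{\{m\}}|},$$ the sum over all $t$-element subsets $\{m\}$; this is the probability that a random error affecting $t$ randomly located qubits is corrected. *)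

(* Defs.v *)
From HB Require Import structures.
From mathcomp Require Import all_boot all_order all_algebra.
Set Implicit Arguments. Unset Strict Implicit. Unset Printing Implicit Defensive.
Import Order.TTheory GRing.Theory Num.Theory.
Local Open Scope ring_scope.

(* Single-qubit Pauli letters I, X, Y, Z with the paper's convention
   Y = [[0,1],[-1,0]]. *)
Inductive letter := PI | PX | PY | PZ.

Definition letter_code (a : letter) : 'I_4 :=
  match a with PI => inord 0 | PX => inord 1 | PY => inord 2 | PZ => inord 3 end.
Definition letter_decode (k : 'I_4) : letter :=
  match val k with 0 => PI | 1 => PX | 2 => PY | _ => PZ end.
Lemma letter_codeK : cancel letter_code letter_decode.
Proof. by case; rewrite /letter_decode /= inordK. Qed.
HB.instance Definition _ := Finite.copy letter (can_type letter_codeK).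

Definition letter_mx (a : letter) : 'M[int]_2 :=
  match a with
  | PI => \matrix_(i, j) (if i == j then 1 else 0)
  | PX => \matrix_(i, j) (if i == j then 0 else 1)
  | PY => \matrix_(i, j) (if i == j then 0 else if i == 0 then 1 else -1)
  | PZ => \matrix_(i, j) (if i == j then (if i == 0 then 1 else -1) else 0)
  end.

(* Product of two letters: (c, k) means  a * b = i^k * c  (as matrices). *)
Definition mul1 (a b : letter) : letter * 'Z_4 :=
  match a, b with
  | PI, c | c, PI => (c, 0%R)
  | PX, PX | PZ, PZ => (PI, 0%R)
  | PY, PY => (PI, 2%:R)
  | PX, PZ => (PY, 2%:R) | PZ, PX => (PY, 0%R)
  | PX, PY => (PZ, 2%:R) | PY, PX => (PZ, 0%R)
  | PY, PZ => (PX, 2%:R) | PZ, PY => (PX, 0%R)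
  end.

(* Sanity check of the multiplication table against the matrices
   (all phases of single-qubit products are real, i.e. k is 0 or 2). *)
Lemma mul1_correct (a b : letter) :
  letter_mx a *m letter_mx b =
  (if val (mul1 a b).2 == 2%N then -1 else 1) *: letter_mx (mul1 a b).1.
Proof.
by case: a; case: b; apply/matrixP => i j;
  rewrite !mxE !big_ord_recr big_ord0 /= !mxE;
  case: i => [[|[|//]] ?]; case: j => [[|[|//]] ?].
Qed.

(* The n-qubit Pauli group G^n: an element (k, f) stands for the operator
   i^k * (f 0 (x) f 1 (x) ... (x) f (n-1)).  Qubit j (1-indexed in the paper)
   is the ordinal j-1. *)
Definition pauli (n : nat) := ('Z_4 * {ffun 'I_n -> letter})%type.

Definition pphase n (g : pauli n) : 'Z_4 := g.1.
Definition plet n (g : pauli n) : {ffun 'I_n -> letter} := g.2.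

Definition pid n : pauli n := (0%R, [ffun _ => PI]).

Definition pmul n (g h : pauli n) : pauli n :=
  ((pphase g + pphase h + \sum_(j < n) (mul1 (plet g j) (plet h j)).2)%R,
   [ffun j => (mul1 (plet g j) (plet h j)).1]).

Definition pscale n (k : 'Z_4) (g : pauli n) : pauli n := ((k + pphase g)%R, plet g).

Definition pcommute n (g h : pauli n) : bool := pmul g h == pmul h g.

(* The subgroup generated by gens: the smallest subset of G^n containing the
   identity and the generators and closed under multiplication (in a finite
   group this is the generated subgroup). *)
Definition gen_group n r (gens : 'I_r -> pauli n) : {set pauli n} :=
  \bigcap_(A : {set pauli n} |
      [&& pid n \in A, [forall i, gens i \in A] &
          [forall g in A, forall h in A, pmul g h \in A]]) A.

Definition in_S_up_to_phase n r (gens : 'I_r -> pauli n) (g : pauli n) : bool :=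
  [exists k : 'Z_4, pscale k g \in gen_group gens].

Definition syndrome n r (gens : 'I_r -> pauli n) (g : pauli n) : {ffun 'I_r -> bool} :=
  [ffun i => ~~ pcommute g (gens i)].

Definition Pset n (m : {set 'I_n}) : {set pauli n} :=
  [set g | (pphase g == 0%R) && [forall j, (j \notin m) ==> (plet g j == PI)]].

Definition Sigma n r (gens : 'I_r -> pauli n) (m : {set 'I_n}) :=
  [set syndrome gens g | g in Pset m].

Definition good_synd n r (gens : 'I_r -> pauli n)
    (phi : {ffun 'I_r -> bool} -> pauli n) (m : {set 'I_n}) :=
  [set e in Sigma gens m |
     [forall g in Pset m, (syndrome gens g == e) ==> in_S_up_to_phase gens (pmul (phi e) g)]].

Definition fS n r (gens : 'I_r -> pauli n) (phi : {ffun 'I_r -> bool} -> pauli n)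
    (t : nat) : rat :=
  (('C(n, t))%:R^-1 *
   \sum_(m : {set 'I_n} | #|m| == t)
      (#|good_synd gens phi m|%:R / #|Sigma gens m|%:R))%R.

Definition pauli_of_seq n (s : seq letter) : pauli n :=
  (0%R, [ffun j : 'I_n => nth PI s j]).

Definition S7_gens (i : 'I_6) : pauli 7 :=
  pauli_of_seq 7 (nth [::] [::
    [:: PI; PI; PI; PX; PX; PX; PX];
    [:: PI; PX; PX; PI; PI; PX; PX];
    [:: PX; PI; PX; PI; PX; PI; PX];
    [:: PI; PI; PI; PZ; PZ; PZ; PZ];
    [:: PI; PZ; PZ; PI; PI; PZ; PZ];
    [:: PZ; PI; PZ; PI; PZ; PI; PZ]]
    i).

Definition single n (L : letter) (a : nat) : pauli n :=
  (0%R, [ffun j : 'I_n => if (a != 0%N) && (val j == a.-1) then L else PI]).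

Definition phi7 (e : {ffun 'I_6 -> bool}) : pauli 7 :=
  let a := (4 * e (inord 0) + 2 * e (inord 1) + e (inord 2))%N in
  let b := (4 * e (inord 3) + 2 * e (inord 4) + e (inord 5))%N in
  pmul (single 7 PZ a) (single 7 PX b).

(* Main.v *)
Require Import Defs.
From mathcomp Require Import all_boot all_order all_algebra.
Import GRing.Theory.
Set Implicit Arguments. Unset Strict Implicit. Unset Printing Implicit Defensive.

Definition xb (a : letter) : bool := match a with PX | PY => true | _ => false end.
Definition zb (a : letter) : bool := match a with PZ | PY => true | _ => false end.
Definition anti1 (a b : letter) : bool := (xb a && zb b) (+) (zb a && xb b).

Fixpoint allseq (T : Type) (A : seq T) (n : nat) : seq (seq T) :=
  if n is n'.+1 then [seq a :: l | a <- A, l <- allseq A n'] else [:: [::]].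

Definition rows : seq (seq letter) := [::
    [:: PI; PI; PI; PX; PX; PX; PX];
    [:: PI; PX; PX; PI; PI; PX; PX];
    [:: PX; PI; PX; PI; PX; PI; PX];
    [:: PI; PI; PI; PZ; PZ; PZ; PZ];
    [:: PI; PZ; PZ; PI; PI; PZ; PZ];
    [:: PZ; PI; PZ; PI; PZ; PI; PZ]].

Definition suml (f : nat -> nat) : nat := f 0 + f 1 + f 2 + f 3 + f 4 + f 5 + f 6.

Definition symp (l r : seq letter) : bool :=
  odd (suml (fun j => anti1 (nth PI l j) (nth PI r j))).

Definition sy (l : seq letter) : seq bool := [seq symp l r | r <- rows].

Definition inC7 (v : nat -> bool) : bool :=
  [&& v 2 == v 0 (+) v 1, v 4 == v 0 (+) v 3, v 5 == v 1 (+) v 3 &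
      v 6 == v 0 (+) v 1 (+) v 3].

Definition inSl (f : nat -> letter) : bool :=
  inC7 (fun k => xb (f k)) && inC7 (fun k => zb (f k)).

Definition mulL (a b : letter) : letter :=
  match a, b with
  | PI, c | c, PI => c
  | PX, PX | PZ, PZ | PY, PY => PI
  | PX, PZ | PZ, PX => PY
  | PX, PY | PY, PX => PZ
  | PY, PZ | PZ, PY => PX
  end.

Definition aZ (c : seq bool) : nat := 4 * nth false c 0 + 2 * nth false c 1 + nth false c 2.
Definition aX (c : seq bool) : nat := 4 * nth false c 3 + 2 * nth false c 4 + nth false c 5.

Definition phil (c : seq bool) (k : nat) : letter :=
  (mulL (if (aZ c != 0) && (k == (aZ c).-1) then PZ else PI)
        (if (aX c != 0) && (k == (aX c).-1) then PX else PI)).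

Definition okl (c : seq bool) (l : seq letter) : bool :=
  inSl (fun k => mulL (phil c k) (nth PI l k)).

Definition isI (a : letter) : bool := if a is PI then true else false.

Definition compat (b : seq bool) (l : seq letter) : bool :=
  all (fun j => nth false b j || isI (nth PI l j)) (iota 0 7).

Fixpoint Lm (b : seq bool) : seq (seq letter) :=
  if b is c :: b' then
    [seq a :: l | a <- (if c then [:: PI; PX; PY; PZ] else [:: PI]), l <- Lm b']
  else [:: [::]].

Definition code6 (c : seq bool) : nat := foldr (fun (b : bool) (n : nat) => (b + n.*2)%N) 0 c.
Definition syn (l : seq letter) : nat := code6 (sy l).

Fixpoint memN (x : nat) (s : seq nat) : bool :=
  if s is y :: s' then eqn x y || memN x s' else false.
Definition seen (k : nat) (ps : seq (nat * bool)) : bool * bool :=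
  foldr (fun p acc => if eqn p.1 k then (true, acc.2 && p.2) else acc) (false, true) ps.

Definition counts (b : seq bool) : nat * nat :=
  let ps := [seq (syn l, okl (sy l) l) | l <- Lm b] in
  let rs := [seq seen k ps | k <- iota 0 64] in
  (count (fun r => r.1 && r.2) rs, count (fun r => r.1) rs).

Definition allb := allseq [:: false; true] 7.

Definition fl (t : nat) : rat :=
  (('C(7, t))%:R^-1 * \sum_(b <- allb | count id b == t) ((counts b).1%:R / (counts b).2%:R))%R.

Arguments sy : simpl never.
Arguments syn : simpl never.
Arguments okl : simpl never.
Arguments symp : simpl never.

Section Sec_Lem1.
Local Open Scope ring_scope.

Lemma mul1_sym a b : (mul1 a b).1 = (mul1 b a).1.
Proof. by case: a; case: b. Qed.

Lemma mul1_swap a b : (mul1 a b).2 = (mul1 b a).2 + ((2 * anti1 a b)%N%:R : 'Z_4).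
Proof. by case: a; case: b; apply/val_inj. Qed.

Lemma mulLE a b : mulL a b = (mul1 a b).1.
Proof. by case: a; case: b. Qed.

Lemma xb_mul a b : xb (mul1 a b).1 = xb a (+) xb b.
Proof. by case: a; case: b. Qed.
Lemma zb_mul a b : zb (mul1 a b).1 = zb a (+) zb b.
Proof. by case: a; case: b. Qed.
Lemma letter_xz a b : xb a = xb b -> zb a = zb b -> a = b.
Proof. by case: a; case: b. Qed.

Lemma pcommuteE n (g h : pauli n) :
  pcommute g h = ~~ odd (\sum_(j < n) anti1 (plet g j) (plet h j)).
Proof.
rewrite /pcommute /pmul xpair_eqE.
have -> : [ffun j => (mul1 (plet g j) (plet h j)).1] ==
          [ffun j => (mul1 (plet h j) (plet g j)).1].
  by apply/eqP/ffunP => j; rewrite !ffunE mul1_sym.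
rewrite andbT.
have -> : \sum_(j < n) (mul1 (plet g j) (plet h j)).2 =
          \sum_(j < n) (mul1 (plet h j) (plet g j)).2 +
          ((2 * \sum_(j < n) anti1 (plet g j) (plet h j))%N%:R : 'Z_4).
  rewrite big_distrr /= natr_sum -big_split /=.
  by apply: eq_bigr => j _; rewrite mul1_swap.
rewrite (addrC (pphase h)) addrA -subr_eq0 [X in X - _]addrC addrK.
rewrite -val_eqE /= val_Zp_nat // -(muln_modr 2 _ 2) modn2.
by case: (odd _).
Qed.

Lemma sum7 (F : nat -> nat) : (\sum_(j < 7) F j)%N = suml F.
Proof. by rewrite /suml !big_ord_recr big_ord0 /= add0n. Qed.

End Sec_Lem1.

Section Sec_Lem2.
Local Open Scope ring_scope.

Definition ecode (e : {ffun 'I_6 -> bool}) : seq bool :=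
  [:: e (inord 0); e (inord 1); e (inord 2); e (inord 3); e (inord 4); e (inord 5)].

Lemma code_step (a b : bool) (n m : nat) : (a + n.*2 = b + m.*2)%N -> a = b /\ n = m.
Proof.
move=> h; have ha : odd (a + n.*2) = odd (b + m.*2) by rewrite h.
rewrite !oddD !odd_double !addbF !oddb in ha; subst b; split => //.
by apply: double_inj; apply/eqP; rewrite -(eqn_add2l a) h.
Qed.

Lemma ecode_inj : injective (fun e => code6 (ecode e)).
Proof.
move=> e1 e2 /= h.
case: (code_step h) => h0 {}h; case: (code_step h) => h1 {}h;
case: (code_step h) => h2 {}h; case: (code_step h) => h3 {}h;
case: (code_step h) => h4 {}h; case: (code_step h) => h5 {}h.
apply/ffunP => i; rewrite -(inord_val i); move: (ltn_ord i).
by case: (nat_of_ord i) => [|[|[|[|[|[|k]]]]]] //= _.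
Qed.

Definition pos (l : seq letter) : pauli 7 := pauli_of_seq 7 l.

Lemma symp_sum l r :
  odd (\sum_(j < 7) anti1 (nth PI l j) (nth PI r j))%N = symp l r.
Proof. by rewrite /symp (sum7 (fun j => anti1 (nth PI l j) (nth PI r j))). Qed.

Lemma symp_ff l r :
  odd (\sum_(j < 7) anti1 ([ffun j0 : 'I_7 => nth PI l j0] j) ([ffun j0 : 'I_7 => nth PI r j0] j))%N
  = symp l r.
Proof.
rewrite -symp_sum; congr odd; apply: eq_bigr => j _; by rewrite !ffunE.
Qed.

Lemma sy_ok l : ecode (syndrome S7_gens (pos l)) = sy l.
Proof.
rewrite /ecode /syndrome /sy /= !ffunE !pcommuteE !negbK.
rewrite /S7_gens /pos /pauli_of_seq /plet /= !inordK //=.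
by rewrite !symp_ff.
Qed.

End Sec_Lem2.

Section Sec_Lem3.
Local Open Scope ring_scope.

Section GG.
Variables (n r : nat) (gens : 'I_r -> pauli n).

Lemma gg_sub (A : {set pauli n}) x :
  pid n \in A -> (forall i, gens i \in A) ->
  (forall g h, g \in A -> h \in A -> pmul g h \in A) ->
  x \in gen_group gens -> x \in A.
Proof.
move=> h1 h2 h3 /bigcapP; apply; apply/and3P; split => //.
  by apply/forallP.
by apply/forall_inP => g hg; apply/forall_inP => h hh; exact: h3.
Qed.

Lemma gg_id : pid n \in gen_group gens.
Proof. by apply/bigcapP => A /and3P[]. Qed.

Lemma gg_gen i : gens i \in gen_group gens.
Proof. by apply/bigcapP => A /and3P[_ /forallP h _]. Qed.

Lemma gg_mul g h : g \in gen_group gens -> h \in gen_group gens ->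
  pmul g h \in gen_group gens.
Proof.
move=> /bigcapP hg /bigcapP hh; apply/bigcapP => A hA.
have gA := hg A hA; have hA' := hh A hA.
case/and3P: hA => _ _ /forall_inP H.
by have /forall_inP := H g gA; apply.
Qed.
End GG.

Definition inSf (v : {ffun 'I_7 -> letter}) : bool := inSl (fun k => v (inord k)).

Lemma inC7_ext f g : (forall k, f k = g k) -> inC7 f = inC7 g.
Proof. by move=> e; rewrite /inC7 !e. Qed.

Lemma inC7_xor f g : inC7 f -> inC7 g -> inC7 (fun k => f k (+) g k).
Proof.
rewrite /inC7 => /and4P[/eqP-> /eqP-> /eqP-> /eqP->] /and4P[/eqP-> /eqP-> /eqP-> /eqP->].
by case: (f 0%N); case: (f 1%N); case: (f 3%N); case: (g 0%N); case: (g 1%N); case: (g 3%N).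
Qed.

Lemma plet_mul n (g h : pauli n) j : plet (pmul g h) j = (mul1 (plet g j) (plet h j)).1.
Proof. by rewrite /plet /pmul /= ffunE. Qed.

Lemma inSf_mul g h : inSf (plet g) -> inSf (plet h) -> inSf (plet (pmul g h)).
Proof.
rewrite /inSf /inSl => /andP[hx hz] /andP[hx' hz']; apply/andP; split.
  rewrite (inC7_ext (g := fun k => xb (plet g (inord k)) (+) xb (plet h (inord k)))).
    exact: inC7_xor.
  by move=> k; rewrite plet_mul xb_mul.
rewrite (inC7_ext (g := fun k => zb (plet g (inord k)) (+) zb (plet h (inord k)))).
  exact: inC7_xor.
by move=> k; rewrite plet_mul zb_mul.
Qed.

Lemma inS_1 g : in_S_up_to_phase S7_gens g -> inSf (plet g).
Proof.
case/existsP => k hk.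
have : pscale k g \in [set x | inSf (plet x)].
  apply: gg_sub hk.
- by rewrite inE /inSf /inSl /inC7 /pid /plet /= !ffunE.
- move=> i; rewrite inE; case: i => [[|[|[|[|[|[|//]]]]]] Hi];
  by rewrite /inSf /inSl /inC7 /S7_gens /pauli_of_seq /plet /= !ffunE !inordK.
  by move=> x y; rewrite !inE; exact: inSf_mul.
by rewrite inE.
Qed.

Definition pw (c : bool) (x : pauli 7) : pauli 7 := if c then x else pid 7.

Lemma pw_in c i : pw c (S7_gens i) \in gen_group S7_gens.
Proof. by case: c; [apply: gg_gen | apply: gg_id]. Qed.

Lemma xb_pw c x j : xb (plet (pw c x) j) = c && xb (plet x j).
Proof. by case: c => //=; rewrite /plet /pid /= ffunE. Qed.
Lemma zb_pw c x j : zb (plet (pw c x) j) = c && zb (plet x j).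
Proof. by case: c => //=; rewrite /plet /pid /= ffunE. Qed.

Lemma inS_2 g : inSf (plet g) -> in_S_up_to_phase S7_gens g.
Proof.
set v := plet g => H.
set c1 := xb (v (inord 3)); set c2 := xb (v (inord 1)); set c3 := xb (v (inord 0)).
set c4 := zb (v (inord 3)); set c5 := zb (v (inord 1)); set c6 := zb (v (inord 0)).
set P := pmul (pw c1 (S7_gens (inord 0))) (pmul (pw c2 (S7_gens (inord 1)))
          (pmul (pw c3 (S7_gens (inord 2))) (pmul (pw c4 (S7_gens (inord 3)))
          (pmul (pw c5 (S7_gens (inord 4))) (pw c6 (S7_gens (inord 5))))))).
have PS : P \in gen_group S7_gens by rewrite /P !gg_mul ?pw_in.
have hP : plet P = v.
  apply/ffunP => j; apply: letter_xz.
    rewrite /P !plet_mul !xb_mul !xb_pw.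
    move: H; rewrite /inSf /inSl /inC7 => /andP[/and4P[/eqP e2 /eqP e4 /eqP e5 /eqP e6] _].
    rewrite /c1 /c2 /c3 -(inord_val j); move: (ltn_ord j) e2 e4 e5 e6.
    case: (nat_of_ord j) => [|[|[|[|[|[|[|//]]]]]]] _ e2 e4 e5 e6;
    rewrite /S7_gens /pauli_of_seq /plet /= !ffunE !inordK //= ?e2 ?e4 ?e5 ?e6;
    by rewrite ?andbT ?andbF; case: (xb (v (inord 0))); case: (xb (v (inord 1))); case: (xb (v (inord 3))).
  rewrite /P !plet_mul !zb_mul !zb_pw.
  move: H; rewrite /inSf /inSl /inC7 => /andP[_ /and4P[/eqP e2 /eqP e4 /eqP e5 /eqP e6]].
  rewrite /c4 /c5 /c6 -(inord_val j); move: (ltn_ord j) e2 e4 e5 e6.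
  case: (nat_of_ord j) => [|[|[|[|[|[|[|//]]]]]]] _ e2 e4 e5 e6;
  rewrite /S7_gens /pauli_of_seq /plet /= !ffunE !inordK //= ?e2 ?e4 ?e5 ?e6;
  by rewrite ?andbT ?andbF; case: (zb (v (inord 0))); case: (zb (v (inord 1))); case: (zb (v (inord 3))).
apply/existsP; exists (pphase P - pphase g).
have -> : pscale (pphase P - pphase g) g = P.
  rewrite /pscale subrK; move: hP; rewrite /v /plet /pphase.
  by case: (P) => a b /= ->.
exact: PS.
Qed.

Lemma inSE g : in_S_up_to_phase S7_gens g = inSf (plet g).
Proof. by apply/idP/idP; [apply: inS_1 | apply: inS_2]. Qed.

End Sec_Lem3.

Lemma mem_conspairs (T : eqType) (A : seq T) (L : seq (seq T)) a l :
  (a :: l \in [seq x :: y | x <- A, y <- L]) = (a \in A) && (l \in L).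
Proof.
apply/allpairsP/andP => [[[x y] /= [hx hy [-> ->]]] | [ha hl]]; first by split.
by exists (a, l).
Qed.

Lemma nil_conspairs (T : eqType) (A : seq T) (L : seq (seq T)) :
  ([::] \in [seq x :: y | x <- A, y <- L]) = false.
Proof. by apply/allpairsP => [[p [_ _ //]]]. Qed.

Lemma mem_allseq (T : eqType) (A : seq T) n l :
  (forall x, x \in A) -> (l \in allseq A n) = (size l == n).
Proof.
move=> hA; elim: n l => [|n IH] [|a l] //=.
- by apply/allpairsP => [[p [_ _ //]]].
- rewrite eqSS -IH; apply/allpairsP/idP => [[[x y] /= [hx hy [_ ->]]] // | hl].
  by exists (a, l); split.
Qed.

Fixpoint compatR (b : seq bool) (l : seq letter) : bool :=
  match b, l with
  | c :: b', a :: l' => (c || isI a) && compatR b' l'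
  | [::], [::] => true
  | _, _ => false
  end.

Definition leqb (a b : letter) : bool :=
  match a, b with
  | PI, PI | PX, PX | PY, PY | PZ, PZ => true
  | _, _ => false
  end.

Lemma eq_letterE (a b : letter) : (a == b) = leqb a b.
Proof. by apply/eqP/idP => [->|]; [case: b | case: a; case: b]. Qed.

Lemma mem_choice (c : bool) (x : letter) :
  (x \in (if c then [:: PI; PX; PY; PZ] else [:: PI])) = c || isI x.
Proof. by case: c; rewrite !inE !eq_letterE; case: x. Qed.

Lemma mem_Lm b l : (l \in Lm b) = compatR b l.
Proof.
elim: b l => [|c b IH] [|a l] //=.
- by apply/allpairsP => [[p [_ _ //]]].
- rewrite -IH.
  apply/allpairsP/andP => [[[x y] /= [hx hy [-> ->]]] | [ha hl]].
    by split => //; rewrite -mem_choice.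
  exists (a, l); split => //=.
  by rewrite mem_choice.
Qed.

Lemma compat_nth b l : compatR b l -> forall j, nth false b j || isI (nth PI l j).
Proof.
elim: b l => [|c b IH] [|a l] //=; first by move=> _ j; rewrite !nth_nil.
by move=> /andP[h1 h2] [|j] //=; apply: IH.
Qed.

Lemma nth_compat b l : size l = size b ->
  (forall j, (j < size b)%N -> nth false b j || isI (nth PI l j)) -> compatR b l.
Proof.
elim: b l => [|c b IH] [|a l] //= [hs] H.
rewrite (H 0%N) //=; apply: IH => // j hj.
exact: (H j.+1).
Qed.

Lemma isIE a : isI a = (a == PI).
Proof. by rewrite eq_letterE; case: a. Qed.

Definition setb (b : seq bool) : {set 'I_7} := [set j : 'I_7 | nth false b j].

Lemma P1 b : size b = 7 -> map pos (Lm b) =i Pset (setb b).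
Proof.
move=> hb x; apply/mapP/idP.
  case=> l; rewrite mem_Lm => hl ->.
  rewrite /Pset inE /pos /pauli_of_seq /pphase /=.
  apply/forallP => j; apply/implyP; rewrite /setb inE ffunE => hj.
  by have := compat_nth hl j; rewrite (negbTE hj) /= isIE.
rewrite /Pset inE => /andP[h0 /forallP H].
exists (mkseq (fun k => plet x (inord k)) 7).
  rewrite mem_Lm; apply: nth_compat; first by rewrite size_mkseq hb.
  rewrite hb => j hj; rewrite nth_mkseq // isIE.
  have := H (inord j); rewrite /setb inE inordK //.
  by case: (nth false b j) => //= /eqP ->.
rewrite /pos /pauli_of_seq; move/eqP: h0; rewrite /pphase; case: x H => [p f] /= H ->.
congr pair; apply/ffunP => j; rewrite ffunE nth_mkseq // inord_val //.
Qed.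

Section GL.
Variables (T U : finType) (f : T -> U) (A : {set T}) (s : seq T).
Hypothesis hs : s =i A.

Lemma GL1 : #|f @: A| = size (undup (map f s)).
Proof.
have E : f @: A =i map f s.
  move=> y; apply/imsetP/mapP => [[x hx ->]|[x hx ->]]; exists x => //.
    by rewrite hs.
  by rewrite -hs.
rewrite (eq_card E) -(eq_card (mem_undup (map f s))).
by apply/card_uniqP; apply: undup_uniq.
Qed.

Lemma GL2 (Q : pred U) : #|[set e in f @: A | Q e]| = size (undup (filter Q (map f s))).
Proof.
have E : [set e in f @: A | Q e] =i filter Q (map f s).
  move=> y; rewrite !inE mem_filter andbC; congr andb.
  apply/imsetP/mapP => [[x hx ->]|[x hx ->]]; exists x => //.
    by rewrite hs.
  by rewrite -hs.
rewrite (eq_card E) -(eq_card (mem_undup _)).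
by apply/card_uniqP; apply: undup_uniq.
Qed.

Lemma GL4 (P : pred T) : [forall x in A, P x] = all P s.
Proof.
apply/forall_inP/allP => H x hx; apply: H; by rewrite ?hs // -hs.
Qed.
End GL.

Lemma GL5 (s : seq nat) N : all (fun x => x < N) s ->
  size (undup s) = count (fun k => k \in s) (iota 0 N).
Proof.
move=> H; rewrite -size_filter; apply: perm_size; apply: uniq_perm.
- exact: undup_uniq.
- by apply: filter_uniq; apply: iota_uniq.
move=> k; rewrite mem_undup mem_filter mem_iota /= add0n.
by case hk: (k \in s) => //=; rewrite (allP H k hk).
Qed.

Lemma code6_lt c : code6 c < 2 ^ size c.
Proof.
elim: c => //= x c IH; rewrite expnS mul2n.
have h : ((code6 c).+1).*2 <= (2 ^ size c).*2 by rewrite leq_double.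
apply: leq_trans h; rewrite doubleS.
by case: x; rewrite /= ?add1n ?add0n.
Qed.

Lemma syn_lt l : syn l < 64.
Proof. by have := code6_lt (sy l); rewrite /syn size_map. Qed.

Lemma has_c (T : Type) (a : pred T) x s : has a (x :: s) = a x || has a s.
Proof. by []. Qed.
Lemma all_c (T : Type) (a : pred T) x s : all a (x :: s) = a x && all a s.
Proof. by []. Qed.

Lemma seen_cons k p ps :
  seen k (p :: ps) = if eqn p.1 k then (true, (seen k ps).2 && p.2) else seen k ps.
Proof. by []. Qed.

Lemma seenE k (L : seq (seq letter)) :
  seen k [seq (syn l, okl (sy l) l) | l <- L] =
  (has (fun l => syn l == k) L, all (fun l => (syn l == k) ==> okl (sy l) l) L).
Proof.
elim: L => [|l L IH]; first by [].
rewrite map_cons seen_cons IH has_c all_c.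
have -> : (syn l, okl (sy l) l).1 = syn l by [].
have -> : (syn l, okl (sy l) l).2 = okl (sy l) l by [].
case: eqnP => [->|/eqP/negbTE->]; first by rewrite eqxx andbC.
by [].
Qed.

Lemma mem_map_has (L : seq (seq letter)) k :
  (k \in map syn L) = has (fun l => syn l == k) L.
Proof.
by apply/mapP/hasP => [[x hx ->]|[x hx /eqP <-]]; exists x.
Qed.


Lemma codeK_map (X : seq (pauli 7)) (L : seq (seq letter)) :
  X = map pos L ->
  size (undup (map (syndrome S7_gens) X)) = size (undup (map syn L)).
Proof.
move=> ->.
rewrite -(size_map (fun e => code6 (ecode e))).
rewrite -undup_map_inj; last exact: ecode_inj.
have E : map (fun e => code6 (ecode e)) (map (syndrome S7_gens) (map pos L)) = map syn L.
  rewrite -!map_comp; apply: eq_map => l.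
  by rewrite /comp /syn -sy_ok.
by rewrite E.
Qed.

Lemma counts2 b : (counts b).2 =
   count (fun k => (seen k [seq (syn l, okl (sy l) l) | l <- Lm b]).1) (iota 0 64).
Proof. by rewrite /counts count_map. Qed.

Lemma counts1 b : (counts b).1 =
   count (fun k => (seen k [seq (syn l, okl (sy l) l) | l <- Lm b]).1 &&
                   (seen k [seq (syn l, okl (sy l) l) | l <- Lm b]).2) (iota 0 64).
Proof. by rewrite /counts count_map. Qed.

Lemma K2 b : size b = 7 -> #|Sigma S7_gens (setb b)| = (counts b).2.
Proof.
move=> hb. rewrite /Sigma (GL1 _ (P1 hb)).
rewrite (codeK_map (erefl _)).
rewrite (GL5 (N := 64)); last by apply/allP => k /mapP [l _ ->]; exact: syn_lt.
rewrite counts2; apply: eq_count => k.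
by rewrite seenE mem_map_has.
Qed.

Lemma inC7_ext7 f g : (forall k, k < 7 -> f k = g k) -> inC7 f = inC7 g.
Proof. by move=> e; rewrite /inC7 !e. Qed.

Lemma inSl_ext7 f g : (forall k, k < 7 -> f k = g k) -> inSl f = inSl g.
Proof.
move=> e; rewrite /inSl (@inC7_ext7 (fun k => xb (f k)) (fun k => xb (g k))).
  by rewrite (@inC7_ext7 (fun k => zb (f k)) (fun k => zb (g k))) // => k hk; rewrite e.
by move=> k hk; rewrite e.
Qed.

Lemma okE e l :
  in_S_up_to_phase S7_gens (pmul (phi7 e) (pos l)) = okl (ecode e) l.
Proof.
rewrite inSE /inSf /okl; apply: inSl_ext7 => k hk.
rewrite plet_mul /phi7 plet_mul /pos /single /pauli_of_seq /plet /phil.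
rewrite !ffunE !inordK // !mulLE.
have hv : val (inord k : 'I_7) = k by apply: inordK.
by rewrite hv.
Qed.

Lemma synE l ly : (syndrome S7_gens (pos ly) == syndrome S7_gens (pos l)) = (syn ly == syn l).
Proof. by rewrite -(inj_eq ecode_inj) /syn !sy_ok. Qed.

Lemma QE b (hb : size b = 7) l :
  [forall g in Pset (setb b), (syndrome S7_gens g == syndrome S7_gens (pos l)) ==>
      in_S_up_to_phase S7_gens (pmul (phi7 (syndrome S7_gens (pos l))) g)]
  = all (fun ly => (syn ly == syn l) ==> okl (sy ly) ly) (Lm b).
Proof.
rewrite (GL4 (P1 hb)) all_map; apply: eq_all => ly.
rewrite -[LHS]/((syndrome S7_gens (pos ly) == syndrome S7_gens (pos l)) ==>
   in_S_up_to_phase S7_gens (pmul (phi7 (syndrome S7_gens (pos l))) (pos ly))).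
rewrite synE.
case: eqP => // h.
have h' : syndrome S7_gens (pos ly) = syndrome S7_gens (pos l).
  by move: h; rewrite /syn -!sy_ok; exact: ecode_inj.
by rewrite okE -h' sy_ok.
Qed.

Lemma K3 b : size b = 7 -> #|good_synd S7_gens phi7 (setb b)| = (counts b).1.
Proof.
move=> hb. rewrite /good_synd (GL2 _ (P1 hb)).
rewrite filter_map filter_map.
rewrite (codeK_map (erefl _)).
rewrite (GL5 (N := 64)); last by apply/allP => k /mapP [l _ ->]; exact: syn_lt.
rewrite counts1; apply: eq_count => k.
rewrite seenE.
rewrite (eq_filter (a2 := fun l => all (fun ly => (syn ly == syn l) ==> okl (sy ly) ly) (Lm b))); last first.
  by move=> l; rewrite -(QE hb l).
apply/mapP/andP => [[l]|[/hasP [l hl /eqP hk] ha]].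
  rewrite mem_filter => /andP[hq hl] ->; split => //.
  by apply/hasP; exists l.
exists l => //; rewrite mem_filter hl andbT.
by rewrite hk.
Qed.

Lemma K1 b : size b = 7 -> #|setb b| = count id b.
Proof.
case: b => [|b0 [|b1 [|b2 [|b3 [|b4 [|b5 [|b6 [|]]]]]]]] // _.
rewrite -sum1_card big_mkcond /=.
rewrite !big_ord_recr big_ord0 /setb !inE /=.
by case: b0; case: b1; case: b2; case: b3; case: b4; case: b5; case: b6.
Qed.

Lemma allb_size b : b \in allb -> size b = 7.
Proof. by rewrite /allb mem_allseq => [/eqP|[]]. Qed.

Lemma setb_inj : {in allb &, injective setb}.
Proof.
move=> b1 b2 h1 h2 E; apply: (@eq_from_nth _ false); first by rewrite !allb_size.
rewrite allb_size // => k hk.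
have := congr1 (fun S : {set 'I_7} => (inord k : 'I_7) \in S) E.
by rewrite /setb !inE !inordK.
Qed.

Lemma allb_uniq : uniq allb.
Proof. by vm_compute. Qed.

Lemma perm_sets : perm_eq (index_enum {set 'I_7}) (map setb allb).
Proof.
apply: uniq_perm; first exact: index_enum_uniq.
  by rewrite map_inj_in_uniq ?allb_uniq //; exact: setb_inj.
move=> m; rewrite mem_index_enum; symmetry; apply/mapP.
exists (mkseq (fun k => (inord k : 'I_7) \in m) 7).
  by rewrite /allb mem_allseq ?size_mkseq // => [[]].
apply/setP => j; rewrite /setb inE nth_mkseq // inord_val //.
Qed.

Lemma fS_eq t : fS S7_gens phi7 t = (('C(7,t))%:R^-1 *
  \sum_(b <- allb | count id b == t) ((counts b).1%:R / (counts b).2%:R))%R.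
Proof.
rewrite /fS; congr (_ * _)%R.
rewrite (perm_big _ perm_sets) big_map big_seq_cond [RHS]big_seq_cond.
apply: eq_big => b.
  by case hb: (b \in allb) => //; rewrite K1 ?allb_size.
by move=> /andP[hb _]; rewrite K2 ?K3 ?allb_size.
Qed.

Definition TAB : seq (nat * (nat * nat)) := [:: (0, (1, 1)); (1, (4, 4)); (1, (4, 4)); ( 2, (9, 16)); (1, (4, 4)); (2, (9, 16)); ( 2, (9, 16)); (3, (25, 64)); (1, (4, 4)); ( 2, (9, 16)); (2, (9, 16)); (3, (25, 64)); ( 2, (9, 16)); (3, (25, 64)); (3, (25, 64)); ( 4, (25, 64)); (1, (4, 4)); (2, (9, 16)); ( 2, (9, 16)); (3, (25, 64)); (2, (9, 16)); ( 3, (25, 64)); (3, (0, 16)); (4, (0, 64)); ( 2, (9, 16)); (3, (0, 16)); (3, (25, 64)); ( 4, (0, 64)); (3, (25, 64)); (4, (0, 64)); ( 4, (0, 64)); (5, (0, 64)); (1, (4, 4)); ( 2, (9, 16)); (2, (9, 16)); (3, (25, 64)); ( 2, (9, 16)); (3, (0, 16)); (3, (25, 64)); ( 4, (0, 64)); (2, (9, 16)); (3, (25, 64)); ( 3, (0, 16)); (4, (0, 64)); (3, (25, 64)); ( 4, (0, 64)); (4, (0, 64)); (5, (0, 64)); ( 2, (9, 16)); (3, (25, 64)); (3, (25, 64)); ( 4, (25, 64)); (3, (25, 64)); (4, (0, 64)); ( 4, (0, 64)); (5, (0, 64)); (3, (25, 64)); ( 4, (0, 64)); (4, (0, 64)); (5,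 (0, 64)); ( 4, (25, 64)); (5, (0, 64)); (5, (0, 64)); ( 6, (0, 64)); (1, (4, 4)); (2, (9, 16)); ( 2, (9, 16)); (3, (0, 16)); (2, (9, 16)); ( 3, (25, 64)); (3, (25, 64)); (4, (0, 64)); ( 2, (9, 16)); (3, (25, 64)); (3, (25, 64)); ( 4, (0, 64)); (3, (0, 16)); (4, (0, 64)); ( 4, (0, 64)); (5, (0, 64)); (2, (9, 16)); ( 3, (25, 64)); (3, (25, 64)); (4, (0, 64)); ( 3, (25, 64)); (4, (25, 64)); (4, (0, 64)); ( 5, (0, 64)); (3, (25, 64)); (4, (0, 64)); ( 4, (25, 64)); (5, (0, 64)); (4, (0, 64)); ( 5, (0, 64)); (5, (0, 64)); (6, (0, 64)); ( 2, (9, 16)); (3, (25, 64)); (3, (25, 64)); ( 4, (0, 64)); (3, (25, 64)); (4, (0, 64)); ( 4, (25, 64)); (5, (0, 64)); (3, (25, 64)); ( 4, (25, 64)); (4, (0, 64)); (5, (0, 64)); ( 4, (0, 64)); (5, (0, 64)); (5, (0, 64)); ( 6, (0, 64)); (3, (0, 16)); (4, (0, 64)); ( 4, (0, 64)); (5, (0, 64)); (4, (0, 64)); ( 5, (0, 64)); (5, (0, 64)); (6, (0, 64)); ( 4, (0, 64)); (5, (0, 64)); (5, (0, 64)); ( 6, (0, 64)); (5, (0, 64)); (6, (0, 64)); ( 6, (0, 64)); (7, (0, 64))].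

Lemma table : map (fun b => (count id b, counts b)) allb = TAB.
Proof. by vm_compute. Qed.

Lemma fS_tab t : fS S7_gens phi7 t = (('C(7,t))%:R^-1 *
  \sum_(p <- TAB | p.1 == t) (p.2.1%:R / p.2.2%:R))%R.
Proof. by rewrite fS_eq -table big_map. Qed.

Theorem mainTheorem3 :
  fS S7_gens phi7 0 = 1%R /\ fS S7_gens phi7 1 = 1%R /\
  fS S7_gens phi7 2 = (9%:R / 16%:R)%R /\ fS S7_gens phi7 3 = (5%:R / 16%:R)%R /\
  fS S7_gens phi7 4 = (5%:R / 64%:R)%R /\
  fS S7_gens phi7 5 = 0%R /\ fS S7_gens phi7 6 = 0%R /\ fS S7_gens phi7 7 = 0%R.
Proof.
by do !split; rewrite fS_tab; apply/eqP; rewrite unlock; vm_compute.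
Qed.
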